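(* In the setting described in the context, assume the Lie differential operator $\pounds_\xi$ commutes with the contraction operator $S$, i.e. $\pounds_\xi\big(S(dx^i\otimes\partial_j)\big)=S\big(\pounds_\xi(dx^i\otimes\partial_j)\big)$ for all $i,j$ and all vector fields $\xi$. Then $\pounds_\xi dx^i=k^i{}_j(\xi)\,dx^j$ with $$k^i{}_j(\xi)=f_j{}^l\,\partial_l\xi^k\,f^i{}_k+f_j{}^l\,(\partial_kf^i{}_l)\,\xi^k .$$ If moreover $S$ commutes with the covariant differential operator $\nabla$, then $$\pounds_\xi dx^i=\Big[f^i{}_k\,\partial_l\xi^k\,f_j{}^l+\big(P^i_{jk}+f_j{}^l\,\Gamma^m_{lk}\,f^i{}_m\big)\xi^k\Big]dx^j,\qquad \pounds_{\partial_k}dx^i=\big(P^i_{jk}+f_j{}^l\,\Gamma^m_{lk}\,f^i{}_m\big)dx^j .$$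
   Context: $M$ is a smooth $n$-manifold with a covariant differential operator $\nabla$ acting on vector fields via a contravariant affine connection $\Gamma$ ($\nabla_{\partial_j}\partial_i=\Gamma^k_{ij}\partial_k$) and on 1-forms via a covariant affine connection $P$ ($\nabla_{\partial_j}dx^i=P^i_{kj}dx^k$), extended to tensors by the Leibniz rule. A contraction operator $S$ (nondegenerate $C^\infty$-bilinear pairing of vector fields and 1-forms, extended to tensor products) has $S(\partial_j,dx^i)=f^i{}_j$ with $\det(f^i{}_j)\ne0$; $f_j{}^i$ denotes the inverse matrix functions, $f^i{}_kf_j{}^k=\delta^i_j$, $f^k{}_if_k{}^j=\delta^j_i$. The Lie differential operator $\pounds_\xi$ acts on functions by $\pounds_\xi f=\xi f$, on vector fields by $\pounds_\xi u=[\xi,u]$ (so $\pounds_\xi\partial_i=-\partial_i\xi^j\,\partial_j$), is linear and satisfies the Leibniz rule on tensor products, and acts on 1-forms by $\pounds_\xi dx^i=k^i{}_j(\xi)dx^j$ for some functions $k^i{}_j(\xi)$ to be determined. *)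

(* Defs.v *)
From HB Require Import structures.
From mathcomp Require Import all_boot all_order all_algebra.
From mathcomp Require Import all_classical all_reals all_analysis.
Set Implicit Arguments. Unset Strict Implicit. Unset Printing Implicit Defensive.
Import Order.TTheory GRing.Theory Num.Theory.
Import numFieldNormedType.Exports.
Local Open Scope classical_set_scope.
Local Open Scope ring_scope.

(* We work in a coordinate chart (x^1..x^n) of M, identified with an open set
   U of R^n = 'rV[R]_n. *)

Definition fn (R : realType) (n : nat) := 'rV[R]_n -> R.
(* vector field X = X^k d_k, stored as k |-> X^k *)
Definition vfield (R : realType) (n : nat) := 'I_n -> fn R n.
(* 1-form w = w_i dx^i, stored as i |-> w_i *)
Definition form1 (R : realType) (n : nat) := 'I_n -> fn R n.
(* tensor T = T_a^b dx^a (x) d_b, stored as (a,b) |-> T_a^b *)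
Definition tens11 (R : realType) (n : nat) := 'I_n -> 'I_n -> fn R n.

Section Coords.
Variables (R : realType) (n : nat).

Definition partial (l : 'I_n) (g : fn R n) : fn R n :=
  fun x => derive g x (delta_mx 0 l : 'rV[R]_n).

Definition smooth_on (U : set 'rV[R]_n) (g : fn R n) : Prop :=
  forall (s : seq 'I_n) (x : 'rV[R]_n), U x -> differentiable (foldr partial g s) x.

Definition smooth_vf (U : set 'rV[R]_n) (X : vfield R n) : Prop :=
  forall k, smooth_on U (X k).

Definition vapp (X : vfield R n) (g : fn R n) : fn R n :=
  fun x => \sum_(k < n) X k x * partial k g x.

Definition dx (i : 'I_n) : form1 R n := fun a _ => if a == i then 1 else 0.
Definition del (j : 'I_n) : vfield R n := fun b _ => if b == j then 1 else 0.

Definition tp (w : form1 R n) (v : vfield R n) : tens11 R n :=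
  fun a b x => w a x * v b x.

(* contraction operator S, C^oo-bilinear with S(d_b, dx^a) = f a b = f^a_b *)
Definition Scontr (f : 'I_n -> 'I_n -> fn R n) (T : tens11 R n) : fn R n :=
  fun x => \sum_(a < n) \sum_(b < n) f a b x * T a b x.

Definition lieV (xi v : vfield R n) : vfield R n :=
  fun j x => vapp xi (v j) x - vapp v (xi j) x.

(* Lie operator on 1-forms, linear with Leibniz rule and
   L_xi dx^i = k xi i j dx^j  (k xi i j = k^i_j(xi)) *)
Definition lie1 (k : vfield R n -> 'I_n -> 'I_n -> fn R n) (xi : vfield R n)
  (w : form1 R n) : form1 R n :=
  fun j x => vapp xi (w j) x + \sum_(i < n) w i x * k xi i j x.

Definition lie_tp (k : vfield R n -> 'I_n -> 'I_n -> fn R n) (xi : vfield R n)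
  (w : form1 R n) (v : vfield R n) : tens11 R n :=
  fun a b x => lie1 k xi w a x * v b x + w a x * lieV xi v b x.

(* covariant differential along X on vector fields:
   nabla_{d_j} d_i = G k i j d_k  (G k i j = Gamma^k_{ij}) *)
Definition nablaV (G : 'I_n -> 'I_n -> 'I_n -> fn R n) (X v : vfield R n)
  : vfield R n :=
  fun c x => vapp X (v c) x + \sum_(i < n) \sum_(j < n) v i x * X j x * G c i j x.

(* covariant differential on 1-forms:
   nabla_{d_j} dx^i = P i a j dx^a  (P i a j = P^i_{aj}) *)
Definition nabla1 (P : 'I_n -> 'I_n -> 'I_n -> fn R n) (X : vfield R n)
  (w : form1 R n) : form1 R n :=
  fun a x => vapp X (w a) x + \sum_(i < n) \sum_(j < n) w i x * X j x * P i a j x.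

Definition nabla_tp (P G : 'I_n -> 'I_n -> 'I_n -> fn R n) (X : vfield R n)
  (w : form1 R n) (v : vfield R n) : tens11 R n :=
  fun a b x => nabla1 P X w a x * v b x + w a x * nablaV G X v b x.

End Coords.

(* Main.v *)
Require Import Defs.
From HB Require Import structures.
From mathcomp Require Import all_boot all_order all_algebra.
From mathcomp Require Import all_classical all_reals all_analysis.
From mathcomp Require Import ring.
Import Order.TTheory GRing.Theory Num.Theory.
Import numFieldNormedType.Exports.
Local Open Scope classical_set_scope.
Local Open Scope ring_scope.

Section H.
Variables (R : realType) (n : nat).

Lemma partial_cst (l : 'I_n) (c : R) : partial l (fun _ : 'rV[R]_n => c) = fun _ => 0.
Proof. apply: funext => x; rewrite /partial; exact: (derive_cst c x). Qed.

Lemma foldr_cst (s : seq 'I_n) (c : R) : exists d : R,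
  foldr (@partial R n) (fun _ => c) s = fun _ => d.
Proof.
elim: s => [|a s IH]; first by exists c.
case: IH => d IH; exists 0; rewrite /= IH; exact: partial_cst.
Qed.

Lemma smooth_del U (m : 'I_n) : smooth_vf U (@del R n m).
Proof.
move=> b s x _; have [d ->] := foldr_cst s (if b == m then 1 else 0).
exact: differentiable_cst.
Qed.

Lemma vapp_cst (X : vfield R n) (c : R) x : vapp X (fun _ => c) x = 0.
Proof. by rewrite /vapp big1 // => k _; rewrite partial_cst mulr0. Qed.

Lemma vapp_del (m : 'I_n) g x : vapp (@del R n m) g x = partial m g x.
Proof.
rewrite /vapp /del (bigD1 m) //= eqxx mul1r big1 ?addr0 // => k /negbTE ->.
by rewrite mul0r.
Qed.

Lemma sum_if (i : 'I_n) (F : 'I_n -> R) :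
  \sum_(a < n) (if a == i then F a else 0) = F i.
Proof. by rewrite -big_mkcond big_pred1_eq. Qed.

Lemma mul_if (b : bool) (a : R) : a * (if b then 1 else 0) = if b then a else 0.
Proof. by case: b; rewrite ?mulr1 ?mulr0. Qed.
Lemma if_mul (b : bool) (a : R) : (if b then 1 else 0) * a = if b then a else 0.
Proof. by case: b; rewrite ?mul1r ?mul0r. Qed.

Lemma S_tp f i j x : Scontr f (tp (@dx R n i) (@del R n j)) x = f i j x.
Proof.
rewrite /Scontr /tp /dx /del /=.
rewrite (bigD1 i) //= [X in _ + X = _]big1 ?addr0.
  rewrite (bigD1 j) //= [X in _ + X = _]big1 ?addr0; first by rewrite !eqxx !mulr1.
  by move=> b /negbTE ->; rewrite !mulr0.
by move=> a /negbTE ->; apply: big1 => b _; rewrite mul0r mulr0.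
Qed.

Lemma S_lie k f xi i j x : Scontr f (lie_tp k xi (@dx R n i) (@del R n j)) x =
  \sum_(a < n) f a j x * k xi i a x - \sum_(b < n) f i b x * partial j (xi b) x.
Proof.
rewrite /Scontr /lie_tp /lie1 /lieV /dx /del /=.
under eq_bigr => a _ do under eq_bigr => b _ do
  rewrite !vapp_cst add0r sub0r (vapp_del j) (eq_bigr _ (fun i0 _ => if_mul _ _)) sum_if mulrDr.
under eq_bigr => a _ do rewrite big_split /=.
rewrite big_split /= -sumrN; congr (_ + _).
  apply: eq_bigr => a _.
  rewrite (bigD1 j) //= [X in _ + X = _]big1 ?addr0; first by rewrite eqxx mulr1 mulrC.
  by move=> b /negbTE ->; rewrite mulr0 mulr0.
rewrite (bigD1 i) //= [X in _ + X = _]big1 ?addr0.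
  by apply: eq_bigr => b _; rewrite eqxx mul1r mulrN.
by move=> a /negbTE ->; apply: big1 => b _; rewrite mul0r mulr0.
Qed.

Lemma sum2_if (i m : 'I_n) (F : 'I_n -> 'I_n -> R) :
  \sum_(i0 < n) \sum_(j0 < n) (if i0 == i then 1 else 0) * (if j0 == m then 1 else 0) * F i0 j0
  = F i m.
Proof.
rewrite (bigD1 i) //= [X in _ + X = _]big1 ?addr0.
  rewrite (bigD1 m) //= [X in _ + X = _]big1 ?addr0; first by rewrite !eqxx !mul1r.
  by move=> b /negbTE ->; rewrite mulr0 mul0r.
by move=> a /negbTE ->; apply: big1 => b _; rewrite !mul0r.
Qed.

Lemma S_nabla P G f (m i j : 'I_n) x :
  Scontr f (nabla_tp P G (@del R n m) (@dx R n i) (@del R n j)) x =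
  \sum_(a < n) f a j x * P i a m x + \sum_(b < n) f i b x * G b j m x.
Proof.
rewrite /Scontr /nabla_tp /nabla1 /nablaV /dx /del /=.
under eq_bigr => a _ do under eq_bigr => b _ do
  rewrite !vapp_cst !add0r !sum2_if mulrDr.
under eq_bigr => a _ do rewrite big_split /=.
rewrite big_split /=; congr (_ + _).
  apply: eq_bigr => a _.
  rewrite (bigD1 j) //= [X in _ + X = _]big1 ?addr0; first by rewrite eqxx mulr1.
  by move=> b /negbTE ->; rewrite mulr0 mulr0.
rewrite (bigD1 i) //= [X in _ + X = _]big1 ?addr0.
  by apply: eq_bigr => b _; rewrite eqxx mul1r.
by move=> a /negbTE ->; apply: big1 => b _; rewrite mul0r mulr0.
Qed.

Lemma solve_k (K A : 'I_n -> R) (F Fi : 'I_n -> 'I_n -> R) (c : 'I_n) :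
  (forall a c, \sum_(l < n) F a l * Fi c l = (a == c)%:R) ->
  (forall l, \sum_(a < n) F a l * K a = A l) ->
  K c = \sum_(l < n) Fi c l * A l.
Proof.
move=> HF HA.
under eq_bigr => l _ do rewrite -HA mulr_sumr.
rewrite exchange_big /=.
transitivity (\sum_(a < n) K a * (a == c)%:R).
  by rewrite (bigD1 c) //= eqxx mulr1 big1 ?addr0 // => a /negbTE ->; rewrite mulr0.
apply: eq_bigr => a _; rewrite -HF mulr_sumr; apply: eq_bigr => l _.
ring.
Qed.

End H.

Theorem mainTheorem5 (R : realType) (n : nat) (U : set 'rV[R]_n)
  (G P : 'I_n -> 'I_n -> 'I_n -> fn R n)
  (f finv : 'I_n -> 'I_n -> fn R n)
  (k : vfield R n -> 'I_n -> 'I_n -> fn R n) :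
  open U ->
  (forall a b c, smooth_on U (G a b c)) ->
  (forall a b c, smooth_on U (P a b c)) ->
  (forall a b, smooth_on U (f a b)) ->
  (forall a b, smooth_on U (finv a b)) ->
  (forall x, U x -> \det (\matrix_(i, j) f i j x) != 0) ->
  (forall i j x, U x -> \sum_(l < n) f i l x * finv j l x = (i == j)%:R) ->
  (forall i j x, U x -> \sum_(l < n) f l i x * finv l j x = (i == j)%:R) ->
  (* L_xi commutes with S *)
  (forall xi, smooth_vf U xi -> forall i j x, U x ->
     vapp xi (Scontr f (tp (dx i) (del j))) x
     = Scontr f (lie_tp k xi (dx i) (del j)) x) ->
  (forall xi, smooth_vf U xi -> forall i j x, U x ->
     k xi i j x = \sum_(l < n) \sum_(m < n) finv j l x * partial l (xi m) x * f i m x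
                + \sum_(l < n) \sum_(m < n) finv j l x * partial m (f i l) x * xi m x)
  /\
  ((* S commutes with nabla *)
   (forall X, smooth_vf U X -> forall i j x, U x ->
      vapp X (Scontr f (tp (dx i) (del j))) x
      = Scontr f (nabla_tp P G X (dx i) (del j)) x) ->
   (forall xi, smooth_vf U xi -> forall i j x, U x ->
      k xi i j x = \sum_(m < n) \sum_(l < n) f i m x * partial l (xi m) x * finv j l x
                 + \sum_(m < n) (P i j m x
                      + \sum_(l < n) \sum_(p < n) finv j l x * G p l m x * f i p x) * xi m x)
   /\
   (forall m i j x, U x ->
      k (del m) i j x = P i j m x
                      + \sum_(l < n) \sum_(p < n) finv j l x * G p l m x * f i p x)).
Proof.
move=> _ _ _ _ _ _ Hinv1 Hinv2 Hlie.
have Sf : forall i l, Scontr f (tp (@dx R n i) (@del R n l)) = f i l.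
  by move=> i l; apply: funext => y; exact: S_tp.
have part1 : forall xi, smooth_vf U xi -> forall i j x, U x ->
     k xi i j x = \sum_(l < n) \sum_(m < n) finv j l x * partial l (xi m) x * f i m x
                + \sum_(l < n) \sum_(m < n) finv j l x * partial m (f i l) x * xi m x.
  move=> xi sxi i c x Ux.
  rewrite (@solve_k R n (fun a => k xi i a x)
    (fun l => vapp xi (f i l) x + \sum_(b < n) f i b x * partial l (xi b) x)
    (fun a l => f a l x) (fun a l => finv a l x) c).
  - rewrite /vapp [RHS]addrC -big_split; apply: eq_bigr => l _ /=.
    rewrite mulrDr !mulr_sumr; congr (_ + _); apply: eq_bigr => m _; ring.
  - by move=> a c'; exact: Hinv1.
  - move=> l /=; have := Hlie xi sxi i l x Ux.
    by rewrite Sf S_lie => ->; rewrite subrK.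
split; first exact: part1.
move=> Hnab.
have Hdf : forall m i l x, U x -> partial m (f i l) x =
    \sum_(a < n) f a l x * P i a m x + \sum_(b < n) f i b x * G b l m x.
  move=> m i l x Ux; have := Hnab (@del R n m) (@smooth_del R n U m) i l x Ux.
  by rewrite S_nabla Sf vapp_del.
have part2 : forall xi, smooth_vf U xi -> forall i j x, U x ->
      k xi i j x = \sum_(m < n) \sum_(l < n) f i m x * partial l (xi m) x * finv j l x
                 + \sum_(m < n) (P i j m x
                      + \sum_(l < n) \sum_(p < n) finv j l x * G p l m x * f i p x) * xi m x.
  move=> xi sxi i j x Ux; rewrite part1 //.
  congr (_ + _).
    rewrite exchange_big; apply: eq_bigr => m _; apply: eq_bigr => l _ /=; ring.
  under eq_bigr => l _ do under eq_bigr => m _ do rewrite Hdf //.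
  rewrite exchange_big; apply: eq_bigr => m _ /=.
  rewrite -mulr_suml; congr (_ * _).
  rewrite (eq_bigr (fun l => finv j l x * (\sum_(a < n) f a l x * P i a m x) + finv j l x * (\sum_(b < n) f i b x * G b l m x))); last by move=> l _; rewrite mulrDr.
  rewrite big_split /=; congr (_ + _).
    transitivity (\sum_(a < n) P i a m x * (\sum_(l < n) f a l x * finv j l x)).
      under eq_bigr => l _ do rewrite mulr_sumr.
      rewrite exchange_big; apply: eq_bigr => a _ /=; rewrite mulr_sumr.
      by apply: eq_bigr => l _; ring.
    under eq_bigr => a _ do rewrite Hinv1 //.
    rewrite (bigD1 j) //= eqxx mulr1 big1 ?addr0 // => a /negbTE ->; exact: mulr0.
  apply: eq_bigr => l _; rewrite mulr_sumr; apply: eq_bigr => p _; ring.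
split; first exact: part2.
move=> m i j x Ux; rewrite (part2 (@del R n m) (@smooth_del R n U m)) //.
rewrite big1 ?add0r; last first.
  move=> m' _; apply: big1 => l _; rewrite /del /= partial_cst; ring.
rewrite (bigD1 m) //= /del eqxx mulr1 [X in _ + X = _]big1 ?addr0 // => m' /negbTE ->; exact: mulr0.
Qed.
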